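(* Let $P=[p_{f,k}]$, $f\in[0,F)$, $k\in[0,K)$, be a $(K,F,S)$ MRA. Consider the MADC model with $F$ batches of files $B_0,\dots,B_{F-1}$, $F$ mapper nodes indexed by $[0,F)$, and $K$ reducer nodes indexed by $[0,K)$, in which mapper node $f$ stores exactly the batch $B_f$ (so $M_f=\{B_f\}$) and reducer node $k$ is connected exactly to the mapper nodes in $\{f\in[0,F):\ p_{f,k}=*\}$. Then this model has computation load $r=1$, and the communication load $$L(1)=\frac{S}{KF}+\sum_{g=2}^{K}\frac{S_g}{KF(g-1)}$$ is achievable, where $S_g$ denotes the number of integers in $[0,S)$ that appear exactly $g$ times in $P$.
   Context: Notation: $[0,n)=\{0,1,\dots,n-1\}$, $[n]=\{1,\dots,n\}$. MADC (multi-access distributed computing) model: There are $\Lambda$ mapper nodes indexed by $[0,\Lambda)$ and $K$ reducer nodes indexed by $[0,K)$. There are $N$ input files $w_0,\dots,w_{N-1}\in\mathbb{F}_{2^d}$ and $Q$ output functions $\phi_q:\mathbb{F}_{2^d}^N\to\mathbb{F}_{2^b}$, $q\in[0,Q)$, of the form $\phi_q(w_0,\dots,w_{N-1})=h_q(v_{q,0},\dots,v_{q,N-1})$, where $v_{q,n}=g_{q,n}(w_n)\in\mathbb{F}_{2^t}$ is called an intermediate value (IV). Each reducer node $k$ is assigned a set $\mathcal W_k\subseteq[0,Q)$ of $Q/K$ output functions, these sets being pairwise disjoint. The files are partitioned into $F$ disjoint batches of $N/F$ files each. Map phase: each mapper node $\lambda$ stores a set $M_\lambda$ of batches and computes all IVs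 $v_{q,n}$, $q\in[0,Q)$, for all files $w_n$ in its stored batches. Each reducer node is connected to a set of mapper nodes and has access to every batch stored at any mapper node it is connected to, together with all IVs computed from those batches. Shuffle phase: each reducer node $k$ broadcasts to all other reducer nodes, error-free, a message $\mathbf X_k$ of $l_k$ bits that is a function of the IVs it has access to. Reduce phase: each reducer node $k$ must recover all IVs $v_{q,n}$ with $q\in\mathcal W_k$, $n\in[0,N)$, from the received messages and the IVs it has access to. The computation load is $r=\sum_{\lambda=0}^{\Lambda-1}|M_\lambda|/F$ and the communication load is $L=\sum_{k=0}^{K-1}l_k/(QNt)$. A communication load $L$ is achievable for a given model (given batches, mapper storage and mapper–reducer connections) if there exists a shuffle/reduce scheme satisfying all decoding requirements that attains $L$ (for a suitable choice of the number of files per batch, the number of functions per reducer, and the IV length $t$). Map-Reduce Array (MRA): For positive integers $K,F,S$, an $F\times K$ array $P=[p_{f,k}]$, $f\in[0,F)$, $k\in[0,K)$, whose entries are either the symbol $*$ or integers from $[0,S)$, with every integer of $[0,S)$ occurring in $P$, is a $(K,F,S)$ MRA if: (C1) each integer occurs more than once in $P$; (C2) whenever two distinct entries satisfy $p_{f_1,k_1}=p_{f_2,k_2}=s$ with $s$ an integer, then $f_1\neq f_2$, $k_1\neq k_2$, and $p_{f_1,k_2}=p_{f_2,k_1}=*$. *)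

(* Defs.v *)
From HB Require Import structures.
From mathcomp Require Import all_boot all_order all_algebra.
Set Implicit Arguments. Unset Strict Implicit. Unset Printing Implicit Defensive.
Import Order.TTheory GRing.Theory Num.Theory.

(* An F x K array with entries either * (None) or an integer of [0,S) (Some s). *)

Definition occ (K F S : nat) (P : 'M[option 'I_S]_(F, K)) (s : 'I_S)
  : {set 'I_F * 'I_K} :=
  [set fk | P fk.1 fk.2 == Some s].

Definition is_MRA (K F S : nat) (P : 'M[option 'I_S]_(F, K)) : Prop :=
  [/\ 0 < K, 0 < F & 0 < S] /\
  [/\
      (forall s : 'I_S, exists f k, P f k = Some s),
      (forall s : 'I_S, 1 < #|occ P s|) &
      (forall (s : 'I_S) (f1 f2 : 'I_F) (k1 k2 : 'I_K),
          (f1, k1) <> (f2, k2) -> P f1 k1 = Some s -> P f2 k2 = Some s ->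
          [/\ f1 <> f2, k1 <> k2, P f1 k2 = None & P f2 k1 = None])].

Definition S_count (K F S : nat) (P : 'M[option 'I_S]_(F, K)) (g : nat) : nat :=
  #|[set s : 'I_S | #|occ P s| == g]|.

(* Lam mapper nodes, K reducer nodes, F batches.
   M lam = set of batches stored at mapper lam,
   conn k = set of mapper nodes reducer k is connected to. *)

Definition comp_load (Lam F : nat) (M : 'I_Lam -> {set 'I_F}) : rat :=
  ((\sum_(lam < Lam) #|M lam|)%:R / F%:R)%R.

(* With eta files per batch (N = F * eta), file n lies in batch n %/ eta.
   Reducer k has access to file n (and all its IVs) iff some mapper it is
   connected to stores the batch of n. *)
Definition has_access (Lam K F eta : nat) (M : 'I_Lam -> {set 'I_F})
  (conn : 'I_K -> {set 'I_Lam}) (k : 'I_K) (n : nat) : bool :=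
  [exists lam in conn k, exists b in M lam, val b == n %/ eta].

(* An assignment of all intermediate values v_{q,n} (t-bit values),
   with Q = K * qpr output functions and N = F * eta files. *)
Definition IVs (Q N t : nat) := 'I_Q -> 'I_N -> t.-tuple bool.

(* Achievability of a communication load L: there exist eta files per batch,
   qpr output functions per reducer (reducer k is assigned the functions q
   with q %/ qpr = k), an IV length t, message lengths l_k, encoders
   (each message X_k is a function of the IVs reducer k has access to) and
   decoders (reducer k decodes from the messages of the other reducers and
   the IVs it has access to) recovering every needed IV, for every possible
   value of the IVs, with L = sum_k l_k / (Q N t). *)
Definition achievable (Lam K F : nat) (M : 'I_Lam -> {set 'I_F})
  (conn : 'I_K -> {set 'I_Lam}) (L : rat) : Prop :=
  exists (eta qpr t : nat) (l : 'I_K -> nat)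
    (enc : forall k : 'I_K, IVs (K * qpr) (F * eta) t -> (l k).-tuple bool)
    (dec : forall k : 'I_K, (forall j : 'I_K, (l j).-tuple bool) ->
             IVs (K * qpr) (F * eta) t -> IVs (K * qpr) (F * eta) t),
    [/\ 0 < eta, 0 < qpr & 0 < t] /\
    [/\
      (forall (k : 'I_K) (v v' : IVs (K * qpr) (F * eta) t),
          (forall (q : 'I_(K * qpr)) (n : 'I_(F * eta)), has_access eta M conn k n -> v q n = v' q n) ->
          enc k v = enc k v'),
      (forall (k : 'I_K) (m m' : forall j : 'I_K, (l j).-tuple bool)
              (v v' : IVs (K * qpr) (F * eta) t),
          (forall j, j <> k -> m j = m' j) ->
          (forall (q : 'I_(K * qpr)) (n : 'I_(F * eta)), has_access eta M conn k n -> v q n = v' q n) ->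
          dec k m v = dec k m' v'),
      (forall (k : 'I_K) (v : IVs (K * qpr) (F * eta) t) (q : 'I_(K * qpr)) (n : 'I_(F * eta)),
          q %/ qpr = k -> dec k (fun j => enc j v) v q n = v q n) &
      L = ((\sum_(k < K) l k)%:R / (K * qpr * (F * eta) * t)%:R)%R].

Definition MRA_storage (F : nat) : 'I_F -> {set 'I_F} := fun f => [set f].
Definition MRA_conn (K F S : nat) (P : 'M[option 'I_S]_(F, K)) : 'I_K -> {set 'I_F} :=
  fun k => [set f | P f k == None].

(* Main.v *)
Require Import Defs.
From HB Require Import structures.
From mathcomp Require Import all_boot all_order all_algebra.
Import Order.TTheory GRing.Theory Num.Theory.
Set Implicit Arguments. Unset Strict Implicit. Unset Printing Implicit Defensive.

Definition bitv (Q N : nat) (v : IVs Q N 1) (e : nat * nat) : bool :=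
  match (insub e.1 : option 'I_Q), (insub e.2 : option 'I_N) with
  | Some q, Some n => thead (v q n)
  | _, _ => false
  end.

Definition xorl (Q N : nat) (v : IVs Q N 1) (L : seq (nat * nat)) : bool :=
  foldr (fun e b => bitv v e (+) b) false L.

Lemma bitvE Q N (v : IVs Q N 1) (q : 'I_Q) (n : 'I_N) :
  bitv v (val q, val n) = thead (v q n).
Proof. by rewrite /bitv /= !valK. Qed.

Lemma tuple1E (t : 1.-tuple bool) : t = [tuple thead t].
Proof. by apply: eq_from_tnth => i; rewrite (ord1 i). Qed.

Lemma xorl_count Q N (v : IVs Q N 1) e L :
  count_mem e L = 1 -> xorl v L = bitv v e (+) xorl v (filter (predC1 e) L).
Proof.
elim: L => [|a L IH] //=.
case: (eqVneq a e) => [->|ne] /=.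
  rewrite add1n => -[] /eqP; rewrite -leqn0 leqNgt -has_count has_pred1 => nin.
  congr (_ (+) xorl v _); symmetry; apply/all_filterP/allP => x xL /=.
  by apply: contraNneq nin => <-.
rewrite add0n => /IH ->.
by case: (bitv v a); case: (bitv v e); case: (xorl _ _).
Qed.

Lemma xorl_eq Q N (v v' : IVs Q N 1) L :
  (forall e, e \in L -> bitv v e = bitv v' e) -> xorl v L = xorl v' L.
Proof.
elim: L => [|a L IH] //= H.
by rewrite H ?mem_head // IH // => e eL; apply: H; rewrite inE eL orbT.
Qed.

Definition ddg (eta g : nat) := eta %/ (g - 1).

Definition Lmsg (K F S : nat) (P : 'M[option 'I_S]_(F, K)) (eta : nat) (s : 'I_S)
  (y : 'I_F * 'I_K) (p : nat) : seq (nat * nat) :=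
  [seq (val z.2, val z.1 * eta + (index y (enum (occ P s :\ z)) * ddg eta #|occ P s| + p))
  | z <- enum (occ P s :\ y)].

Definition codes (K F S : nat) (P : 'M[option 'I_S]_(F, K)) (eta : nat) (j : 'I_K)
  : seq (seq (nat * nat)) :=
  flatten [seq flatten [seq [seq Lmsg P eta s y p | p <- iota 0 (ddg eta #|occ P s|)]
                       | y <- enum [set y in occ P s | y.2 == j]]
          | s <- enum 'I_S].

Lemma mem_codes K F S (P : 'M[option 'I_S]_(F, K)) eta s y p :
  y \in occ P s -> p < ddg eta #|occ P s| -> Lmsg P eta s y p \in codes P eta y.2.
Proof.
move=> yo pd; apply/flattenP; exists
  (flatten [seq [seq Lmsg P eta s y0 p0 | p0 <- iota 0 (ddg eta #|occ P s|)]
                       | y0 <- enum [set y0 in occ P s | y0.2 == y.2]]).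
  by apply: map_f; rewrite mem_enum.
apply/flattenP; exists [seq Lmsg P eta s y p0 | p0 <- iota 0 (ddg eta #|occ P s|)].
  by apply: map_f; rewrite mem_enum inE yo eqxx.
by apply: map_f; rewrite mem_iota.
Qed.

Lemma in_codes K F S (P : 'M[option 'I_S]_(F, K)) eta j L :
  L \in codes P eta j -> exists s y p,
    [/\ y \in occ P s, y.2 = j, p < ddg eta #|occ P s| & L = Lmsg P eta s y p].
Proof.
case/flattenP => A /mapP [s _ ->] /flattenP [B /mapP [y]].
rewrite mem_enum inE => /andP [yo /eqP yj] -> /mapP [p].
rewrite mem_iota add0n => /andP [_ pd] ->.
by exists s, y, p.
Qed.


Lemma MRA_C2 K F S (P : 'M[option 'I_S]_(F, K)) s (x y : 'I_F * 'I_K) :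
  is_MRA P -> x \in occ P s -> y \in occ P s -> x != y ->
  [/\ x.1 <> y.1, x.2 <> y.2 & P x.1 y.2 = None].
Proof.
move=> [_ [_ _ C2]]; rewrite !inE => /eqP xo /eqP yo ne.
have ne' : (x.1, x.2) <> (y.1, y.2) by case: x ne {xo} => a b; case: y {yo} => c d /= /eqP.
by case: (C2 s x.1 y.1 x.2 y.2 ne' xo yo).
Qed.

Lemma MRA_card K F S (P : 'M[option 'I_S]_(F, K)) s :
  is_MRA P -> 1 < #|occ P s| <= K.
Proof.
move=> H; have [_ [_ C1 _]] := H; rewrite C1 /=.
have inj : {in occ P s &, injective (fun x : 'I_F * 'I_K => x.2)}.
  move=> x y xo yo e; apply/eqP; apply/negP => /negP ne.
  by case: (MRA_C2 H xo yo ne).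
rewrite -(card_in_imset inj); apply: leq_trans (max_card _) _.
by rewrite card_ord.
Qed.

Lemma ddg_spec K g : 1 < g <= K -> 0 < ddg K`! g /\ ddg K`! g * (g - 1) = K`!.
Proof.
move=> /andP [g1 gK]; have dv : (g - 1) %| K`!.
  apply: dvdn_fact; apply/andP; split; first by rewrite subn_gt0.
  by apply: leq_trans (leq_subr _ _) gK.
split; last by rewrite /ddg divnK.
rewrite /ddg divn_gt0; last by rewrite subn_gt0.
exact: dvdn_leq (fact_gt0 K) dv.
Qed.

Lemma off_lt K F S (P : 'M[option 'I_S]_(F, K)) s (y z : 'I_F * 'I_K) p :
  is_MRA P -> y \in occ P s -> z \in occ P s -> y != z ->
  p < ddg K`! #|occ P s| ->
  index y (enum (occ P s :\ z)) * ddg K`! #|occ P s| + p < K`!.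
Proof.
move=> H yo zo ne pd.
have [d0 dE] := ddg_spec (MRA_card s H).
have : index y (enum (occ P s :\ z)) < #|occ P s| - 1.
  rewrite (cardsD1 z) zo add1n subn1 /= cardE index_mem mem_enum.
  by rewrite in_setD1 ne yo.
move: (index _ _) (ddg _ _) (#|occ P s| - 1) dE pd => i d g <- pd ig.
apply: leq_trans (_ : (i.+1) * d <= _); first by rewrite mulSn [d + _]addnC ltn_add2l.
by rewrite [d * _]mulnC leq_mul2r ig orbT.
Qed.

Lemma bitv_eq Q N (v v' : IVs Q N 1) (A : pred nat) e :
  (forall q n, A (val n) -> v q n = v' q n) -> A e.2 -> bitv v e = bitv v' e.
Proof.
move=> H Ae; rewrite /bitv; case: (insub e.1) => [q|] //.
case: insubP => [n _ En|] //; by rewrite H // En.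
Qed.

Lemma acc_of K F S (P : 'M[option 'I_S]_(F, K)) eta (k : 'I_K) (f : 'I_F) n :
  P f k = None -> val f = n %/ eta -> has_access eta (@MRA_storage F) (MRA_conn P) k n.
Proof.
move=> Pf fn; apply/existsP; exists f; rewrite /MRA_conn inE Pf eqxx /=.
by apply/existsP; exists f; rewrite /MRA_storage set11 /= fn eqxx.
Qed.

Lemma Lmsg_mem K F S (P : 'M[option 'I_S]_(F, K)) s y p e :
  is_MRA P -> y \in occ P s -> p < ddg K`! #|occ P s| ->
  e \in Lmsg P K`! s y p ->
  exists z : 'I_F * 'I_K, [/\ z \in occ P s, z != y, e = (val z.2, val z.1 * K`! +
     (index y (enum (occ P s :\ z)) * ddg K`! #|occ P s| + p)) & e.2 %/ K`! = val z.1].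
Proof.
move=> H yo pd /mapP [z]; rewrite mem_enum in_setD1 => /andP [zy zo] ->.
exists z; split => //=.
rewrite divnMDl ?fact_gt0 // divn_small ?addn0 //.
by apply: off_lt => //; rewrite eq_sym.
Qed.

Lemma codes_acc K F S (P : 'M[option 'I_S]_(F, K)) (k : 'I_K) L e :
  is_MRA P -> L \in codes P K`! k -> e \in L ->
  has_access K`! (@MRA_storage F) (MRA_conn P) k e.2.
Proof.
move=> H /in_codes [s [y [p [yo yk pd ->]]]] /(Lmsg_mem H yo pd) [z [zo zy _ ez]].
apply: (@acc_of _ _ _ _ _ _ z.1) => //.
by case: (MRA_C2 H zo yo zy) => _ _; rewrite yk.
Qed.

Definition Mx K F S (P : 'M[option 'I_S]_(F, K)) eta :=
  (\max_(j < K) size (codes P eta j)).+1.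

Definition good K F S (P : 'M[option 'I_S]_(F, K)) eta (k : 'I_K) (e : nat * nat)
  (jc : 'I_K * 'I_(Mx P eta)) : bool :=
  [&& jc.1 != k, count_mem e (nth [::] (codes P eta jc.1) jc.2) == 1 &
      all (fun e' => (e' == e) || has_access eta (@MRA_storage F) (MRA_conn P) k e'.2)
          (nth [::] (codes P eta jc.1) jc.2)].

Definition decbit K F S (P : 'M[option 'I_S]_(F, K)) eta (k : 'I_K)
  (m : forall j : 'I_K, (size (codes P eta j)).-tuple bool) Q N (v : IVs Q N 1)
  (e : nat * nat) : bool :=
  if [pick jc : 'I_K * 'I_(Mx P eta) | good k e jc] is Some jc then
    nth false (m jc.1) jc.2 (+) xorl v (filter (predC1 e) (nth [::] (codes P eta jc.1) jc.2))
  else false.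

Definition dec K F S (P : 'M[option 'I_S]_(F, K)) eta (k : 'I_K)
  (m : forall j : 'I_K, (size (codes P eta j)).-tuple bool) Q N (v : IVs Q N 1)
  : IVs Q N 1 :=
  fun q n => if has_access eta (@MRA_storage F) (MRA_conn P) k (val n) then v q n
             else [tuple decbit k m v (val q, val n)].

Definition encf K F S (P : 'M[option 'I_S]_(F, K)) eta Q N (j : 'I_K) (v : IVs Q N 1)
  : (size (codes P eta j)).-tuple bool :=
  map_tuple (xorl v) (in_tuple (codes P eta j)).

Lemma good_val K F S (P : 'M[option 'I_S]_(F, K)) eta (k : 'I_K) Q N (v : IVs Q N 1) e (jc : 'I_K * 'I_(Mx P eta)) :
  good k e jc ->
  nth false (encf P eta jc.1 v) jc.2
    (+) xorl v (filter (predC1 e) (nth [::] (codes P eta jc.1) jc.2)) = bitv v e.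
Proof.
case/and3P => _ /eqP c1 _.
have cs : jc.2 < size (codes P eta jc.1).
  rewrite ltnNge; apply/negP => cs; move: c1; by rewrite nth_default.
rewrite /encf /= (nth_map [::]) // (xorl_count v c1).
by case: (bitv v e); case: (xorl _ _).
Qed.

Lemma decode_exists K F S (P : 'M[option 'I_S]_(F, K)) (k : 'I_K) nv :
  is_MRA P -> nv < F * K`! ->
  ~~ has_access K`! (@MRA_storage F) (MRA_conn P) k nv ->
  exists jc : 'I_K * 'I_(Mx P K`!), good k (val k, nv) jc.
Proof.
move=> H nF nacc.
have eta0 : 0 < K`! := fact_gt0 K.
have fF : nv %/ K`! < F by rewrite ltn_divLR.
pose f : 'I_F := Ordinal fF.
case Pf : (P f k) => [s|]; last by move: nacc; rewrite (@acc_of _ _ _ _ _ _ f).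
pose x := (f, k).
have xo : x \in occ P s by rewrite inE /= Pf.
have [d0 dE] := ddg_spec (MRA_card s H).
set d := ddg K`! #|occ P s| in d0 dE.
set r := nv %% K`!.
have rlt : r < K`! by rewrite ltn_mod.
pose a := r %/ d; pose p := r %% d.
have pd : p < d by rewrite ltn_mod.
pose E := enum (occ P s :\ x).
have szE : size E = #|occ P s| - 1.
  by rewrite -cardE (cardsD1 x (occ P s)) xo add1n subn1.
have aE : a < size E by rewrite szE ltn_divLR // mulnC dE.
pose y := nth x E a.
have yE : y \in occ P s :\ x by rewrite -mem_enum mem_nth.
move: (yE); rewrite in_setD1 => /andP [yx yo].
have [_ jk _] := MRA_C2 H yo xo yx.
pose L := Lmsg P K`! s y p.
have Lc : L \in codes P K`! y.2 by apply: mem_codes.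
have cM : index L (codes P K`! y.2) < Mx P K`!.
  rewrite /Mx ltnS; apply: leq_trans _ (leq_bigmax y.2).
  by apply: ltnW; rewrite index_mem.
exists (y.2, Ordinal cM); rewrite /good /= nth_index //.
have hx : (val k, nv) = (val x.2, val x.1 * K`! +
     (index y (enum (occ P s :\ x)) * ddg K`! #|occ P s| + p)).
  rewrite /= index_uniq ?enum_uniq // -/d /a /p -divn_eq /r.
  by rewrite [nv in LHS](divn_eq nv K`!) mulnC.
have xL : (val k, nv) \in L.
  rewrite hx; apply: (map_f (fun z : 'I_F * 'I_K => (val z.2, val z.1 * K`! +
     (index y (enum (occ P s :\ z)) * ddg K`! #|occ P s| + p)))).
  by rewrite mem_enum in_setD1 xo eq_sym yx.
have uL : uniq L.
  rewrite map_inj_in_uniq ?enum_uniq // => z1 z2.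
  rewrite !mem_enum !in_setD1 => /andP [_ z1o] /andP [_ z2o] [] /val_inj e12 _.
  apply/eqP; apply/negP => /negP ne.
  by case: (MRA_C2 H z1o z2o ne).
rewrite (count_uniq_mem _ uL) xL eqxx.
apply/andP; split.
  by apply/eqP => e; apply: jk; rewrite e.
apply/allP => e eL; apply/orP; case: (eqVneq e (val k, nv)) => [-> | ne]; first by left.
right; have [z [zo zy ez e2]] := Lmsg_mem H yo pd eL.
have zx : z != x.
  apply: contra_neq ne => zx; rewrite ez hx zx.
  by [].
apply: (@acc_of _ _ _ _ _ _ z.1) => //.
by case: (MRA_C2 H zo xo zx).
Qed.

Lemma size_flatten_map (T U : Type) (s : seq T) (f : T -> seq U) :
  size (flatten (map f s)) = \sum_(x <- s) size (f x).
Proof. by elim: s => [|a s IH]; rewrite ?big_nil ?big_cons //= size_cat IH. Qed.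

Lemma size_codes K F S (P : 'M[option 'I_S]_(F, K)) eta j :
  size (codes P eta j) =
  \sum_(s < S) #|[set y in occ P s | y.2 == j]| * ddg eta #|occ P s|.
Proof.
rewrite /codes size_flatten_map big_enum /=; apply: eq_bigr => s _.
rewrite size_flatten_map big_enum /=.
under eq_bigr do rewrite size_map size_iota.
by rewrite sum_nat_const.
Qed.

Lemma sum_occj K F S (P : 'M[option 'I_S]_(F, K)) s :
  \sum_(j < K) #|[set y in occ P s | y.2 == j]| = #|occ P s|.
Proof.
rewrite -sum1_card (partition_big (fun y : 'I_F * 'I_K => y.2) xpredT) //=.
apply: eq_bigr => j _; rewrite -sum1_card; apply: eq_bigl => y.
by rewrite inE.
Qed.

Lemma total_codes K F S (P : 'M[option 'I_S]_(F, K)) eta :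
  \sum_(j < K) size (codes P eta j) =
  \sum_(s < S) #|occ P s| * ddg eta #|occ P s|.
Proof.
under eq_bigr do rewrite size_codes.
rewrite exchange_big /=; apply: eq_bigr => s _.
by rewrite -big_distrl /= sum_occj.
Qed.

Lemma regroup S K (h : 'I_S -> nat) (c : nat -> nat) :
  (forall s, 2 <= h s < K.+1) ->
  \sum_(s < S) c (h s) = \sum_(2 <= g < K.+1) #|[set s | h s == g]| * c g.
Proof.
move=> hr.
under [RHS]eq_bigr do rewrite -sum_nat_const big_mkcond /=.
rewrite exchange_big /=; apply: eq_bigr => s _.
rewrite (eq_bigr (fun g => if g == h s then c (h s) else 0)); last first.
  by move=> g _; rewrite inE eq_sym; case: eqP => // ->.
by rewrite -big_mkcond big_nat1_eq hr.
Qed.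

Lemma total_eq K F S (P : 'M[option 'I_S]_(F, K)) :
  is_MRA P ->
  \sum_(s < S) #|occ P s| * ddg K`! #|occ P s| =
  S * K`! + \sum_(2 <= g < K.+1) S_count P g * ddg K`! g.
Proof.
move=> H.
have step : forall s : 'I_S, #|occ P s| * ddg K`! #|occ P s| = K`! + ddg K`! #|occ P s|.
  move=> s; have /andP [g1 _] := MRA_card s H.
  have [_ dE] := ddg_spec (MRA_card s H).
  rewrite -{1}(subnK (ltnW g1)) mulnDl mul1n mulnC dE //.
rewrite (eq_bigr _ (fun s _ => step s)).
rewrite big_split /= sum_nat_const card_ord; congr (_ + _).
rewrite /S_count (@regroup S K (fun s => #|occ P s|) (ddg K`!)) // => s.
by rewrite ltnS; exact: MRA_card s H.
Qed.

From mathcomp Require Import ring.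

Lemma rat_eq (A D E K : nat) (B d : nat -> nat) :
  0 < D -> 0 < E -> (forall g, 2 <= g < K.+1 -> d g * (g - 1) = E) ->
  ((A%:R / D%:R + \sum_(2 <= g < K.+1) (B g)%:R / (D * (g - 1))%:R : rat)
   = (A * E + \sum_(2 <= g < K.+1) B g * d g)%:R / (D * E)%:R)%R.
Proof.
move=> D0 E0 dE.
have D0' : (D%:R : rat) != 0%R by rewrite pnatr_eq0 -lt0n.
have E0' : (E%:R : rat) != 0%R by rewrite pnatr_eq0 -lt0n.
rewrite natrD natr_sum GRing.mulrDl; congr (_ + _)%R.
  by rewrite !natrM; field; rewrite E0' D0'.
rewrite GRing.mulr_suml; apply: eq_big_nat => g gr.
have /andP [g2 _] := gr.
have g0 : ((g - 1)%:R : rat) != 0%R by rewrite pnatr_eq0 -lt0n subn_gt0.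
have d0 : ((d g)%:R : rat) != 0%R.
  by rewrite pnatr_eq0 -lt0n; move: E0; rewrite -(dE g gr) muln_gt0 => /andP [].
by rewrite -(dE g gr) !natrM; field; rewrite g0 d0 D0'.
Qed.

From Stdlib Require Import FunctionalExtensionality.

Local Open Scope ring_scope.

Theorem theorem2 (K F S : nat) (P : 'M[option 'I_S]_(F, K)) :
  is_MRA P ->
  comp_load (@MRA_storage F) = 1 /\
  achievable (@MRA_storage F) (MRA_conn P)
    (S%:R / (K * F)%:R
     + \sum_(2 <= g < K.+1) (S_count P g)%:R / (K * F * (g - 1))%:R).
Proof.
move=> H; have [[K0 F0 S0] _] := H.
split.
  rewrite /comp_load /MRA_storage.
  under eq_bigr do rewrite cards1.
  by rewrite sum1_card card_ord divff // pnatr_eq0 -lt0n.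
exists K`!, 1%N, 1%N, (fun k => size (codes P K`! k)),
  (fun k v => encf P K`! k v), (fun k m v => dec k m v).
split; first by rewrite fact_gt0.
split.
- move=> k v v' Hv; apply: val_inj; rewrite /= /encf /=.
  apply/eq_in_map => L LC; apply: xorl_eq => e eL.
  apply: (bitv_eq (A := fun n => has_access K`! (@MRA_storage F) (MRA_conn P) k n)) => //.
  exact: codes_acc H LC eL.
- move=> k m m' v v' Hm Hv.
  apply: functional_extensionality => q; apply: functional_extensionality => n.
  rewrite /dec; case: ifP => acc; first exact: Hv.
  have -> : decbit k m v (val q, val n) = decbit k m' v' (val q, val n); last by [].
  rewrite /decbit; case: pickP => [jc gjc|] //.
  case/and3P: gjc => jk _ allacc.
  rewrite Hm; last by apply/eqP.
  congr (_ (+) _); apply: xorl_eq => e'; rewrite mem_filter => /andP [ne e'L].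
  apply: (bitv_eq (A := fun n => has_access K`! (@MRA_storage F) (MRA_conn P) k n)) => //.
  by move/allP: allacc => /(_ e' e'L); rewrite (negbTE ne).
- move=> k v q n qk; rewrite /dec; case: ifP => acc //.
  have -> : decbit k (fun j => encf P K`! j v) v (val q, val n) = thead (v q n).
    rewrite /decbit; case: pickP => [jc gjc|none].
      by rewrite (good_val v gjc) bitvE.
    have qk' : val q = val k by move: qk; rewrite divn1.
    have [jc gjc] := decode_exists H (ltn_ord n) (negbT acc).
    by move: (none jc); rewrite qk' gjc.
  by rewrite -tuple1E.
- rewrite total_codes total_eq // !muln1 mulnA.
  rewrite (@rat_eq S (K * F) K`! K (S_count P) (ddg K`!)) //.
  + by rewrite muln_gt0 K0 F0.
  + exact: fact_gt0.
  + move=> g /andP [g2 gK].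
    have gr : (1 < g <= K)%N by rewrite g2 -ltnS.
    by have [_ ->] := ddg_spec gr.
Qed.
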